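(* Let $n\ge2$ be an integer. (a) $\mathrm{Sym}^n\mathbb{R}[e_1]\cap \mathrm{Sym}^n\mathbb{H}\cdot\triangle^{(n)}_\mathbb{H}=\{0\}$. (b) $\mathrm{Sym}^n\mathbb{H}\cap \mathrm{Sym}^n\mathbb{O}\cdot\triangle^{(n)}_\mathbb{O}=\{0\}$.
   Context: $\mathbb{O}$ is the Cayley octonion algebra over $\mathbb{R}$ with basis $e_0=1,e_1,\dots,e_7$; $1,e_1,e_2,e_3$ span the quaternion subalgebra $\mathbb{H}$ ($e_i^2=-1$, $e_1e_2=-e_2e_1=e_3$, $e_2e_3=-e_3e_2=e_1$, $e_3e_1=-e_1e_3=e_2$), $\mathbb{O}=\mathbb{H}\oplus\mathbb{H}e_4$ is the Cayley–Dickson double with $e_4^2=-1$, $e_{i+4}=e_ie_4$ ($i=1,2,3$), $(x+ye_4)(z+we_4)=(xz-\bar wy)+(wx+y\bar z)e_4$; $\mathbb{R}[e_1]$ is the subalgebra spanned by $1,e_1$. For $\mathcal A\in\{\mathbb{R}[e_1],\mathbb{H},\mathbb{O}\}$, $\mathcal A^{\otimes n}$ is the $n$-fold tensor power over $\mathbb{R}$ with componentwise multiplication, $\mathfrak S_n$ acts by permuting factors, $x^\vee=\frac1{n!}\sum_{\sigma\in\mathfrak S_n}\sigma(x)$, and $\mathrm{Sym}^n\mathcal A$ is the subalgebra of fixed tensors; $\mathrm{Sym}^n\mathbb{R}[e_1]\subset\mathrm{Sym}^n\mathbb{H}\subset\mathrm{Sym}^n\mathbb{O}$. For $\mathcal C\in\{\mathbb{H},\mathbb{O}\}$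 of dimension $d$, $\triangle_{\mathcal C}=\frac1d\sum_{i=0}^{d-1}e_i\otimes e_i$ and $\triangle^{(n)}_{\mathcal C}=(\triangle_{\mathcal C}\otimes1^{\otimes(n-2)})^\vee$; $\mathrm{Sym}^n\mathcal C\cdot\triangle^{(n)}_{\mathcal C}=\{r\triangle^{(n)}_{\mathcal C}: r\in\mathrm{Sym}^n\mathcal C\}$. *)

(* Defs.v *)
From HB Require Import structures.
From mathcomp Require Import all_boot all_order all_algebra.
From mathcomp Require Import fingroup perm.
From mathcomp Require Import reals.
Set Implicit Arguments. Unset Strict Implicit. Unset Printing Implicit Defensive.
Import Order.TTheory GRing.Theory Num.Theory.
Local Open Scope ring_scope.

Section Defs.
Variable R : realType.

(** Quaternions as coordinate vectors w.r.t. 1,e1,e2,e3. *)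
Definition qmul (a b : 'I_4 -> R) : 'I_4 -> R := fun k =>
  let a0 := a (inord 0) in let a1 := a (inord 1) in
  let a2 := a (inord 2) in let a3 := a (inord 3) in
  let b0 := b (inord 0) in let b1 := b (inord 1) in
  let b2 := b (inord 2) in let b3 := b (inord 3) in
  match val k with
  | 0 => a0 * b0 - a1 * b1 - a2 * b2 - a3 * b3
  | 1 => a0 * b1 + a1 * b0 + a2 * b3 - a3 * b2
  | 2 => a0 * b2 - a1 * b3 + a2 * b0 + a3 * b1
  | _ => a0 * b3 + a1 * b2 - a2 * b1 + a3 * b0
  end.

Definition qconj (a : 'I_4 -> R) : 'I_4 -> R :=
  fun k => if val k == 0%N then a k else - a k.

Definition qadd (a b : 'I_4 -> R) : 'I_4 -> R := fun k => a k + b k.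
Definition qsub (a b : 'I_4 -> R) : 'I_4 -> R := fun k => a k - b k.

(** Octonions as coordinate vectors w.r.t. e_0..e_7, with the Cayley-Dickson
    product (x + y e4)(z + w e4) = (xz - conj(w) y) + (w x + y conj(z)) e4,
    where coordinate 4+i of an octonion is coordinate i of its y-part
    (e_{i+4} = e_i e_4). *)
Definition lo (x : 'I_8 -> R) : 'I_4 -> R := fun i => x (inord i).
Definition hi (x : 'I_8 -> R) : 'I_4 -> R := fun i => x (inord (4 + i)).

Definition omul (u v : 'I_8 -> R) : 'I_8 -> R := fun k =>
  let x := lo u in let y := hi u in let z := lo v in let w := hi v in
  if (val k < 4)%N then qsub (qmul x z) (qmul (qconj w) y) (inord k)
  else qadd (qmul w x) (qmul y (qconj z)) (inord (val k - 4)).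

Definition obasis (i : 'I_8) : 'I_8 -> R := fun t => if t == i then 1 else 0.

Definition gam (i j k : 'I_8) : R := omul (obasis i) (obasis j) k.

(** n-fold tensor power of O, as coefficient functions on multi-indices
    (basis e_{I 0} (x) ... (x) e_{I (n-1)}). *)
Definition tens (n : nat) := {ffun 'I_n -> 'I_8} -> R.

Definition tmul n (x y : tens n) : tens n := fun K =>
  \sum_(I : {ffun 'I_n -> 'I_8}) \sum_(J : {ffun 'I_n -> 'I_8})
     x I * y J * \prod_(t < n) gam (I t) (J t) (K t).

Definition tact n (s : {perm 'I_n}) (x : tens n) : tens n :=
  fun I => x [ffun t => I (s t)].

Definition symz n (x : tens n) : tens n :=
  fun I => (n`!%:R)^-1 * \sum_(s : {perm 'I_n}) tact s x I.

Definition is_sym n (x : tens n) : Prop := forall s : {perm 'I_n}, tact s x = x.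

(** x lies in A^{(x)n} where A is spanned by e_0,...,e_{d-1}
    (d = 2 : R[e1], d = 4 : H, d = 8 : O) *)
Definition supported n (d : nat) (x : tens n) : Prop :=
  forall I : {ffun 'I_n -> 'I_8}, (exists t, (d <= val (I t))%N) -> x I = 0.

Definition SymA n (d : nat) (x : tens n) : Prop := is_sym x /\ supported d x.

(** triangle_C (x) 1^{(x)(n-2)}, with triangle_C = (1/d) sum_{i<d} e_i (x) e_i *)
Definition delta0 n (d : nat) : tens n := fun I =>
  if [forall t : 'I_n, (2 <= val t)%N ==> (I t == ord0)] &&
     [forall s : 'I_n, forall t : 'I_n,
        ((val s == 0%N) && (val t == 1%N)) ==> ((I s == I t) && (val (I s) < d)%N)]
  then (d%:R)^-1 else 0.

Definition deltan n (d : nat) : tens n := symz (@delta0 n d).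

End Defs.
Arguments delta0 R n d : clear implicits.
Arguments deltan R n d : clear implicits.

(* Main.v *)
Require Import Defs.
From HB Require Import structures.
From mathcomp Require Import all_boot all_order all_algebra.
From mathcomp Require Import fingroup perm.
From mathcomp Require Import reals.
From mathcomp Require Import ring lra zify.
From Stdlib Require Import FunctionalExtensionality.
Require Import Defs.
Import Order.TTheory GRing.Theory Num.Theory.
Local Open Scope ring_scope.
Set Implicit Arguments. Unset Strict Implicit. Unset Printing Implicit Defensive.

Definition tbl : seq (seq (nat * bool)) := [:: [:: (0,false); (1,false); (2,false); (3,false); (4,false); (5,false); (6,false); (7,false)];
 [:: (1,false); (0,true); (3,false); (2,true); (5,false); (4,true); (7,true); (6,false)];
 [:: (2,false); (3,true); (0,true); (1,false); (6,false); (7,false); (4,true); (5,true)];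
 [:: (3,false); (2,false); (1,true); (0,true); (7,false); (6,true); (5,false); (4,true)];
 [:: (4,false); (5,true); (6,true); (7,true); (0,true); (1,false); (2,false); (3,false)];
 [:: (5,false); (4,false); (7,true); (6,false); (1,true); (0,true); (3,true); (2,false)];
 [:: (6,false); (7,false); (4,false); (5,true); (2,true); (3,false); (0,true); (1,true)];
 [:: (7,false); (6,true); (5,false); (4,false); (3,true); (2,true); (1,false); (0,true)]].
Definition gz (u i k : nat) : int :=
  let p := nth (0%N,false) (nth [::] tbl u) i in
  if k == p.1 then (if p.2 then -1 else 1) else 0.

Lemma inord_eqE n m (x : 'I_n.+1) : (m < n.+1)%N -> (inord m == x) = (m == val x).
Proof. by move=> H; rewrite -val_eqE /= inordK. Qed.

Lemma gamE (R : realType) (u i k : 'I_8) : gam R u i k = (gz u i k)%:~R.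
Proof.
case: k => [[|[|[|[|[|[|[|[|//]]]]]]]] Hk];
rewrite /gam /omul /obasis /lo /hi /qsub /qadd /qmul /qconj /= !inordK // !inord_eqE // ?(subSS, subn0, addnS, addn0);
case: u => [[|[|[|[|[|[|[|[|//]]]]]]]] Hu];
case: i => [[|[|[|[|[|[|[|[|//]]]]]]]] Hi];
rewrite /gz /=; ring.
Qed.

Definition Cz (d u v k0 k1 : nat) : int :=
  foldr (fun i acc => gz u i k0 * gz v i k1 + acc) 0 (iota 0 d).
Definition chk (d : nat) : bool :=
  all (fun u => all (fun v => all (fun k0 => all (fun k1 =>
    Cz d u v k0 k1 + Cz d v u k0 k1 == 2%:Z * ((u == v) && (k0 == k1) && (k0 < d)%N)%:Z)
    (iota 0 8)) (iota 0 8)) (iota 0 d)) (iota 0 d).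
Lemma chk4 : chk 4. Proof. by vm_compute. Qed.
Lemma chk8 : chk 8. Proof. by vm_compute. Qed.
Definition chk0 : bool := all (fun u => all (fun k => gz u 0 k == (u == k)%:Z) (iota 0 8)) (iota 0 8).
Lemma chk0T : chk0. Proof. by vm_compute. Qed.

Lemma gam0 (R : realType) (u k : 'I_8) : gam R u ord0 k = (u == k)%:R.
Proof.
rewrite gamE; have := chk0T; rewrite /chk0 => /allP/(_ (val u)).
rewrite mem_iota ltn_ord => /(_ isT) /allP /(_ (val k)); rewrite mem_iota ltn_ord => /(_ isT) /eqP ->.
by [].
Qed.

Lemma foldr_big (f : nat -> int) l : foldr (fun i acc => f i + acc) 0 l = \sum_(i <- l) f i.
Proof. by elim: l => [|x l IH] /=; rewrite ?big_nil ?big_cons ?IH. Qed.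

Lemma pair_tab (R : realType) (d : nat) (hd : d = 4%N \/ d = 8%N) (u v k0 k1 : 'I_8) :
  (u < d)%N -> (v < d)%N ->
  \sum_(i < 8 | (i < d)%N) (gam R u i k0 * gam R v i k1) +
  \sum_(i < 8 | (i < d)%N) (gam R v i k0 * gam R u i k1) =
  2 * ((u == v) && (k0 == k1) && (k0 < d)%N)%:R.
Proof.
move=> hu hv.
have hc : chk d by case: hd => ->; [exact: chk4 | exact: chk8].
have d8 : (d <= 8)%N by case: hd => ->.
have E : forall a b : 'I_8, \sum_(i < 8 | (i < d)%N) (gam R a i k0 * gam R b i k1) = (Cz d a b k0 k1)%:~R.
  move=> a b; rewrite /Cz foldr_big rmorph_sum /=.
  have -> : iota 0 d = index_iota 0 d by rewrite /index_iota subn0.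
  rewrite big_mkord (big_ord_widen _ (fun i => (gz a i k0 * gz b i k1)%:~R) d8).
  by apply: eq_bigr => i _; rewrite !gamE rmorphM.
rewrite !E -rmorphD /=.
move: hc => /allP /(_ (val u)); rewrite mem_iota hu => /(_ isT) /allP /(_ (val v)).
rewrite mem_iota hv => /(_ isT) /allP /(_ (val k0)); rewrite mem_iota ltn_ord => /(_ isT).
move=> /allP /(_ (val k1)); rewrite mem_iota ltn_ord => /(_ isT) /eqP ->.
by rewrite rmorphM /=.
Qed.

Section Main.
Variables (R : realType) (n : nat) (hn : (1 < n)%N).
Notation idx := {ffun 'I_n -> 'I_8}.
Definition o0 : 'I_n := Ordinal (ltnW hn).
Definition o1 : 'I_n := Ordinal hn.
Lemma o01 : o0 != o1. Proof. by []. Qed.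

Definition pupd (K : idx) (a b : 'I_8) : idx :=
  [ffun t => if t == o0 then a else if t == o1 then b else K t].
Definition pcomp (K : idx) (s : {perm 'I_n}) : idx := [ffun t => K (s t)].

Lemma upd0 K a b : pupd K a b o0 = a. Proof. by rewrite ffunE eqxx. Qed.
Lemma upd1 K a b : pupd K a b o1 = b. Proof. by rewrite ffunE eq_sym (negPf o01) eqxx. Qed.
Lemma updK K a b c e : pupd (pupd K a b) c e = pupd K c e.
Proof. by apply/ffunP => t; rewrite !ffunE; case: (t == o0) => //; case: (t == o1). Qed.

Lemma sym_comp (r : tens R n) s K : Defs.is_sym r -> r (pcomp K s) = r K.
Proof. by move=> h; have := h s => /(congr1 (fun f => f K)). Qed.

Lemma sum_comp (F : idx -> R) s : \sum_J F J = \sum_J F (pcomp J s).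
Proof.
rewrite (reindex (fun J => pcomp J s)) //.
exists (fun J => pcomp J s^-1) => J _; apply/ffunP => t; rewrite !ffunE ?permK ?permKV //.
Qed.

Lemma tmul_delta (r : tens R n) d K : Defs.is_sym r ->
  tmul r (deltan R n d) K =
  (n`!%:R)^-1 * \sum_(s : {perm 'I_n}) tmul r (delta0 R n d) (pcomp K s).
Proof.
move=> hr; rewrite /tmul /deltan /symz /tact.
set c := (n`!%:R)^-1 : R.
transitivity (c * \sum_(s : {perm 'I_n}) \sum_I \sum_J
   r I * delta0 R n d (pcomp J s) * \prod_(t < n) gam R (I t) (J t) (K t)).
  rewrite [in RHS]exchange_big /=.
  under [in RHS]eq_bigr => I _ do rewrite exchange_big /=.
  rewrite [in RHS]mulr_sumr; apply: eq_bigr => I _.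
  rewrite [in RHS]mulr_sumr; apply: eq_bigr => J _.
  rewrite -mulr_suml -mulr_sumr /pcomp; ring.
congr (_ * _); apply: eq_bigr => s _.
rewrite [in RHS](sum_comp _ s); apply: eq_bigr => I _.
rewrite [in RHS](sum_comp _ s); apply: eq_bigr => J _.
rewrite [r (pcomp I s)]sym_comp //.
suff -> : \prod_(t < n) gam R (pcomp I s t) (pcomp J s t) (pcomp K s t) =
          \prod_(t < n) gam R (I t) (J t) (K t) by [].
rewrite [in RHS](reindex_inj (@perm_inj _ s)) /=; apply: eq_bigr => t _.
by rewrite !ffunE.
Qed.

Definition Z0 : idx := [ffun => ord0].

Lemma eq_o0 (t : 'I_n) : (t == o0) = (val t == 0%N). Proof. by []. Qed.
Lemma eq_o1 (t : 'I_n) : (t == o1) = (val t == 1%N). Proof. by []. Qed.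

Lemma delta0E d J : delta0 R n d J =
  \sum_(i : 'I_8 | (i < d)%N) (J == pupd Z0 i i)%:R * (d%:R)^-1.
Proof.
rewrite /delta0; case: ifP => [/andP [h1 h2] | hf].
  have /andP [e01 hd] : (J o0 == J o1) && (J o0 < d)%N.
    by move/forallP: h2 => /(_ o0) /forallP /(_ o1) /implyP; apply.
  have eJ : J = pupd Z0 (J o0) (J o0).
    apply/ffunP => t; rewrite !ffunE; case: ifP => [/eqP -> //|h0].
    case: ifP => [/eqP -> |h1']; first by rewrite (eqP e01).
    apply/eqP; move/forallP: h1 => /(_ t) /implyP; apply.
    by move: h0 h1'; rewrite eq_o0 eq_o1; case: (val t) => [|[|]].
  rewrite (bigD1 (J o0)) //= -eJ eqxx big1 ?addr0 ?mul1r // => i /andP [_ hi].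
  case: eqP => [eJi|]; last by rewrite mul0r.
  by move: hi; rewrite eJi upd0 eqxx.
rewrite big1 // => i hi; case: eqP => [eJ|]; last by rewrite mul0r.
move: hf; rewrite eJ; suff -> : [forall t : 'I_n, (1 < t)%N ==> (pupd Z0 i i t == ord0)] &&
  [forall s : 'I_n, forall t : 'I_n, (val s == 0%N) && (val t == 1%N) ==>
     (pupd Z0 i i s == pupd Z0 i i t) && (pupd Z0 i i s < d)%N] by [].
apply/andP; split.
  apply/forallP => t; apply/implyP => ht; rewrite !ffunE eq_o0 eq_o1.
  by move: ht; rewrite -[nat_of_ord t]/(val t); case: (val t) => [|[|m]].
apply/forallP => a; apply/forallP => b; apply/implyP => /andP [ha hb].
by rewrite -eq_o0 in ha; rewrite -eq_o1 in hb; rewrite (eqP ha) (eqP hb) upd0 upd1 eqxx hi.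
Qed.

Lemma sum_delta0 d (G : idx -> R) :
  \sum_J G J * delta0 R n d J = (d%:R)^-1 * \sum_(i : 'I_8 | (i < d)%N) G (pupd Z0 i i).
Proof.
under eq_bigr do rewrite delta0E mulr_sumr.
rewrite exchange_big mulr_sumr; apply: eq_bigr => i _.
rewrite (bigD1 (pupd Z0 i i)) //= eqxx big1 ?addr0; first by rewrite mul1r mulrC.
by move=> J hJ; rewrite (negPf hJ) mul0r mulr0.
Qed.

Lemma pupd_off K a b t : t != o0 -> t != o1 -> pupd K a b t = K t.
Proof. by move=> h0 h1; rewrite ffunE (negPf h0) (negPf h1). Qed.

Lemma prod_split (I K : idx) i :
  \prod_(t < n) gam R (I t) (pupd Z0 i i t) (K t) =
  gam R (I o0) i (K o0) * gam R (I o1) i (K o1) * (I == pupd K (I o0) (I o1))%:R.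
Proof.
rewrite (bigD1 o0) // (bigD1 o1) //= upd0 upd1 mulrA; congr (_ * _).
transitivity (\prod_(t < n | (t != o0) && (t != o1)) ((I t == K t)%:R : R)).
  by apply: eq_bigr => t /andP [h0 h1]; rewrite pupd_off // ffunE gam0.
case: eqP => [eI | hne].
  apply: big1 => t /andP [h0 h1]; rewrite {1}eI pupd_off // eqxx //.
case: (boolP [exists t, I t != pupd K (I o0) (I o1) t]) => [/existsP [t ht] | /existsPn h]; last first.
  by exfalso; apply: hne; apply/ffunP => t; apply/eqP; move: (h t); rewrite negbK.
have h0 : t != o0 by apply: contraNneq ht => ->; rewrite upd0.
have h1 : t != o1 by apply: contraNneq ht => ->; rewrite upd1.
rewrite (bigD1 t) /=; last by rewrite h0 h1.
by move: ht; rewrite pupd_off // => /negPf ->; rewrite mul0r.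
Qed.

Lemma sumI (r : tens R n) (K : idx) (i : 'I_8) :
  \sum_I r I * \prod_(t < n) gam R (I t) (pupd Z0 i i t) (K t) =
  \sum_(u : 'I_8) \sum_(v : 'I_8) r (pupd K u v) * (gam R u i (K o0) * gam R v i (K o1)).
Proof.
under eq_bigr => I _ do rewrite prod_split.
transitivity (\sum_I \sum_(u : 'I_8) \sum_(v : 'I_8) ((I == pupd K u v)%:R *
   (r (pupd K u v) * (gam R u i (K o0) * gam R v i (K o1))))).
  apply: eq_bigr => I _.
  rewrite (bigD1 (I o0)) //= [X in _ + X]big1 ?addr0; last first.
    move=> u hu; apply: big1 => v _.
    rewrite (_ : (I == pupd K u v) = false) ?mul0r //; apply/negbTE.
    by apply: contra hu => /eqP {1}->; rewrite upd0.
  rewrite (bigD1 (I o1)) //= [X in _ + X]big1 ?addr0; last first.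
    move=> v hv; rewrite (_ : (I == pupd K (I o0) v) = false) ?mul0r //; apply/negbTE.
    by apply: contra hv => /eqP {1}->; rewrite upd1.
  by case: eqP => [e | _]; [rewrite -e mulr1 mul1r | rewrite mulr0 mul0r mulr0].
rewrite exchange_big; apply: eq_bigr => u _; rewrite exchange_big; apply: eq_bigr => v _.
rewrite (bigD1 (pupd K u v)) //= eqxx mul1r big1 ?addr0 // => I hI.
by rewrite (negPf hI) mul0r.
Qed.

Lemma pair_sum d (hd : d = 4%N \/ d = 8%N) (s : 'I_8 -> 'I_8 -> R) (k0 k1 : 'I_8) :
  (forall u v : 'I_8, s u v = s v u) -> (forall u v : 'I_8, (d <= u)%N -> s u v = 0) ->
  \sum_(i : 'I_8 | (i < d)%N) \sum_(u : 'I_8) \sum_(v : 'I_8) s u v * (gam R u i k0 * gam R v i k1) =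
  ((k0 == k1) && (k0 < d)%N)%:R * \sum_(i : 'I_8 | (i < d)%N) s i i.
Proof.
move=> ss s0.
set C := fun u v : 'I_8 => \sum_(i : 'I_8 | (i < d)%N) gam R u i k0 * gam R v i k1.
have e1 : \sum_(i : 'I_8 | (i < d)%N) \sum_(u : 'I_8) \sum_(v : 'I_8) s u v * (gam R u i k0 * gam R v i k1)
   = \sum_(u : 'I_8) \sum_(v : 'I_8) s u v * C u v.
  rewrite exchange_big; apply: eq_bigr => u _; rewrite exchange_big; apply: eq_bigr => v _.
  by rewrite mulr_sumr.
have e2 : \sum_(u : 'I_8) \sum_(v : 'I_8) s u v * C u v = \sum_(u : 'I_8) \sum_(v : 'I_8) s u v * C v u.
  by rewrite exchange_big; apply: eq_bigr => u _; apply: eq_bigr => v _; rewrite ss.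
have e3 : \sum_(u : 'I_8) \sum_(v : 'I_8) s u v * (C u v + C v u) =
    2 * (((k0 == k1) && (k0 < d)%N)%:R * \sum_(u : 'I_8) s u u).
  transitivity (\sum_(u : 'I_8) \sum_(v : 'I_8) s u v * (2 * ((u == v) && (k0 == k1) && (k0 < d)%N)%:R)).
    apply: eq_bigr => u _; apply: eq_bigr => v _.
    case: (ltnP u d) => hu; last by rewrite s0 // !mul0r.
    case: (ltnP v d) => hv; last by rewrite ss s0 // !mul0r.
    by rewrite /C pair_tab.
  rewrite [in RHS]mulr_sumr [in RHS]mulr_sumr; apply: eq_bigr => u _.
  rewrite (bigD1 u) //= eqxx big1 ?addr0 => [|v hv]; first by rewrite /=; ring.
  by rewrite eq_sym (negPf hv) /= mulr0 mulr0.
have e4 : \sum_(u : 'I_8) s u u = \sum_(i : 'I_8 | (i < d)%N) s i i.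
  rewrite [in RHS]big_mkcond; apply: eq_bigr => u _; case: ltnP => h //; by rewrite s0.
rewrite e1 -e4.
have : \sum_(u : 'I_8) \sum_(v : 'I_8) s u v * C u v + \sum_(u : 'I_8) \sum_(v : 'I_8) s u v * C u v
   = 2 * (((k0 == k1) && (k0 < d)%N)%:R * \sum_(u : 'I_8) s u u).
  rewrite -e3 {2}e2 -big_split; apply: eq_bigr => u _; rewrite -big_split; apply: eq_bigr => v _.
  by rewrite mulrDr.
lra.
Qed.

Definition tau (r : tens R n) d (K : idx) := \sum_(i : 'I_8 | (i < d)%N) r (pupd K i i).

Lemma pupd_swap (K : idx) u v : pupd K v u = pcomp (pupd K u v) (tperm o0 o1).
Proof.
apply/ffunP => t; rewrite !ffunE.
case: (eqVneq t o0) => [-> | h0]; first by rewrite tpermL.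
case: (eqVneq t o1) => [-> | h1]; first by rewrite tpermR.
have e : tperm o0 o1 t = t by apply: tpermD; rewrite eq_sym.
by rewrite e (negPf h0) (negPf h1).
Qed.

Lemma tmul_delta0 (r : tens R n) d (hd : d = 4%N \/ d = 8%N) (K : idx) :
  Defs.is_sym r -> supported d r ->
  tmul r (delta0 R n d) K = (d%:R)^-1 * ((K o0 == K o1) && (K o0 < d)%N)%:R * tau r d K.
Proof.
move=> hr hs; rewrite /tmul.
transitivity (\sum_I (d%:R)^-1 * \sum_(i : 'I_8 | (i < d)%N)
    r I * \prod_(t < n) gam R (I t) (pupd Z0 i i t) (K t)).
  apply: eq_bigr => I _.
  rewrite -(sum_delta0 d (fun J => r I * \prod_(t < n) gam R (I t) (J t) (K t))).
  by apply: eq_bigr => J _ /=; rewrite mulrAC.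
rewrite -mulr_sumr exchange_big /=.
under eq_bigr => i _ do rewrite sumI.
rewrite pair_sum // ?mulrA //.
  by move=> u v; rewrite pupd_swap sym_comp.
move=> u v hu; apply: hs; exists o0; by rewrite upd0.
Qed.

Lemma card_cnt (P : pred 'I_n) : #|[pred t | P t]| = count P (Finite.enum 'I_n).
Proof. by rewrite cardE -size_filter. Qed.

Lemma sym_count (r : tens R n) (K1 K2 : idx) : Defs.is_sym r ->
  (forall v : 'I_8, #|[pred t | K1 t == v]| = #|[pred t | K2 t == v]|) -> r K1 = r K2.
Proof.
move=> hr hc.
have E : forall K : idx, tval [tuple K i | i < n] = map K (enum 'I_n) by [].
have hp : perm_eq [tuple K2 i | i < n] [tuple K1 i | i < n].
  apply/allP => x _; apply/eqP.
  rewrite !E !count_map; move: (hc x); rewrite !card_cnt => h; exact: (esym h).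
case/tuple_permP: hp => p hp.
have hp' : [tuple K2 i | i < n] = [tuple tnth [tuple K1 i | i < n] (p i) | i < n] := val_inj hp.
have e : K2 = pcomp K1 p.
  apply/ffunP => t; rewrite ffunE.
  by have := congr1 (fun s => tnth s t) hp'; rewrite !tnth_mktuple.
by rewrite e sym_comp.
Qed.

Lemma card_upd (P : pred 'I_8) (K : idx) a b :
  (#|[pred t | P (pupd K a b t)]| + P (K o0) + P (K o1) = #|[pred t | P (K t)]| + P a + P b)%N.
Proof.
rewrite (cardD1 o0) (cardD1 o1) [in RHS](cardD1 o0) [in RHS](cardD1 o1).
have ec : #|[predD1 [predD1 [pred t | P (pupd K a b t)] & o0] & o1]| =
          #|[predD1 [predD1 [pred t | P (K t)] & o0] & o1]|.
  apply: eq_card => t; rewrite !inE.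
  case: (eqVneq t o1) => //= h1; case: (eqVneq t o0) => //= h0; by rewrite pupd_off.
rewrite ec !inE upd0 upd1 eq_sym o01 /=.
ring.
Qed.

Lemma card_comp (P : pred 'I_8) (K : idx) s :
  #|[pred t | P (pcomp K s t)]| = #|[pred t | P (K t)]|.
Proof.
rewrite -(card_image (@perm_inj _ s) [pred t | P (pcomp K s t)]).
apply: eq_card => y; rewrite -{1}(permKV s y) mem_image; last exact: perm_inj.
by rewrite !inE ffunE permKV.
Qed.

Lemma card_upd1 v (K : idx) a b :
  (#|[pred t | pupd K a b t == v]| + (K o0 == v) + (K o1 == v) =
   #|[pred t | K t == v]| + (a == v) + (b == v))%N.
Proof. exact: (card_upd (fun x => x == v)). Qed.
Lemma card_updw w (K : idx) a b :
  (#|[pred t | pupd K a b t != w]| + (K o0 != w) + (K o1 != w) =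
   #|[pred t | K t != w]| + (a != w) + (b != w))%N.
Proof. exact: (card_upd (fun x => x != w)). Qed.
Lemma card_comp1 v (K : idx) s :
  #|[pred t | pcomp K s t == v]| = #|[pred t | K t == v]|.
Proof. exact: (card_comp (fun x => x == v)). Qed.
Lemma card_compw w (K : idx) s :
  #|[pred t | pcomp K s t != w]| = #|[pred t | K t != w]|.
Proof. exact: (card_comp (fun x => x != w)). Qed.

Lemma tau_zero (r : tens R n) d ds (w : 'I_8) (hd : d = 4%N \/ d = 8%N) :
  Defs.is_sym r -> supported d r -> supported ds (tmul r (deltan R n d)) ->
  (ds <= w)%N -> (w < d)%N -> forall L, tau r d L = 0.
Proof.
move=> hr hs hx hw1 hw2.
pose mu := fun L : idx => #|[pred t | pupd L w w t != w]|.
suff H : forall k L, (mu L < k)%N -> tau r d L = 0 by move=> L; exact: (H (mu L).+1).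
elim=> [//|k IH] L hL.
have [L' eL'] : {L' | L' = pupd L w w} by eexists.
have L0 : L' o0 = w by rewrite eL' upd0.
have L1 : L' o1 = w by rewrite eL' upd1.
have tL : tau r d L' = tau r d L by rewrite /tau eL'; apply: eq_bigr => i _; rewrite updK.
have muL : mu L = #|[pred t | L' t != w]| by rewrite /mu eL'.
have hx0 : tmul r (deltan R n d) L' = 0 by apply: hx; exists o0; rewrite L0.
rewrite tmul_delta // in hx0.
have E : \sum_(s : {perm 'I_n}) tmul r (delta0 R n d) (pcomp L' s) =
    \sum_(s : {perm 'I_n}) ((d%:R)^-1 * tau r d L) * ((L' (s o0) == w) && (L' (s o1) == w))%:R.
  apply: eq_bigr => s _; rewrite tmul_delta0 // !ffunE.
  case: (eqVneq (L' (s o0)) w) => ha; case: (eqVneq (L' (s o1)) w) => hb /=.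
  - have -> : tau r d (pcomp L' s) = tau r d L.
      rewrite -tL /tau; apply: eq_bigr => i _; apply: sym_count => // v.
      have h1 := card_upd1 v (pcomp L' s) i i; have h2 := card_upd1 v L' i i.
      move: h1; rewrite card_comp1 !ffunE ha hb => h1.
      move: h2; rewrite L0 L1 => h2.
      lia.
    by rewrite ha hb eqxx hw2 /=; ring.
  - by rewrite ha (eq_sym w) (negPf hb) /= !(mulr0, mul0r).
  - by rewrite hb (negPf ha) /= !(mulr0, mul0r).
  - rewrite mulr0.
    rewrite IH ?mulr0 //.
    have h1 := card_updw w (pcomp L' s) w w.
    move: h1; rewrite card_compw !ffunE ha hb -muL eqxx /= => h1.
    rewrite !addn0 !addn1 in h1; move: hL; rewrite -h1 ltnS; exact: ltnW.
rewrite E -mulr_sumr in hx0.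
have hN : 0 < \sum_(s : {perm 'I_n}) (((L' (s o0) == w) && (L' (s o1) == w))%:R : R).
  rewrite (bigD1 (1%g : {perm 'I_n})) //= !perm1 L0 L1 eqxx /=.
  apply: (lt_le_trans ltr01); rewrite lerDl; apply: sumr_ge0 => s _; exact: ler0n.
have hd0 : (d%:R : R) != 0 by case: hd => ->; rewrite pnatr_eq0.
have hf : ((n`!)%:R : R) != 0 by rewrite pnatr_eq0 -lt0n fact_gt0.
move/eqP: hx0; rewrite !mulf_eq0 !invr_eq0 (negPf hd0) (negPf hf) (gt_eqF hN) /= orbF.
by move/eqP.
Qed.

Lemma main_zero (r : tens R n) d ds (w : 'I_8) (hd : d = 4%N \/ d = 8%N) :
  Defs.is_sym r -> supported d r -> supported ds (tmul r (deltan R n d)) ->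
  (ds <= w)%N -> (w < d)%N -> tmul r (deltan R n d) = (fun _ => 0).
Proof.
move=> hr hs hx hw1 hw2; apply: functional_extensionality => K.
rewrite tmul_delta // big1 ?mulr0 // => s _.
by rewrite tmul_delta0 // (tau_zero hd hr hs hx hw1 hw2) mulr0.
Qed.

End Main.

Unset Implicit Arguments.
Theorem lemma2p7 (R : realType) (n : nat) (hn : (2 <= n)%N) :
  (forall x : tens R n, SymA 2 x ->
     (exists r : tens R n, SymA 4 r /\ x = tmul r (deltan R n 4)) -> x = (fun _ => 0))
  /\
  (forall x : tens R n, SymA 4 x ->
     (exists r : tens R n, SymA 8 r /\ x = tmul r (deltan R n 8)) -> x = (fun _ => 0)).
Proof.
split=> x [_ hx] [r [[hr hs] ex]]; subst x.
  by apply: (@main_zero R n hn r 4 2 (inord 2)); rewrite ?inordK //; left.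
by apply: (@main_zero R n hn r 8 4 (inord 4)); rewrite ?inordK //; right.
Qed.
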